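(* Consider a discounted MDP with finite state space $\mathcal{S}$, finite action space $\mathcal{A}$, reward vector $r\in\mathbb{R}^{|\mathcal{S}||\mathcal{A}|}$, transition matrix $P\in\mathbb{R}_+^{|\mathcal{S}||\mathcal{A}|\times|\mathcal{S}|}$ with $P_{sa,\tilde s}=\Pr(\tilde s\mid s,a)$, initial state distribution $\mu_0$, and discount factor $\gamma\in[0,1)$. Let $\theta\mapsto\pi_\theta$ be a differentiable parametrized policy, and let $q_\phi\in\mathbb{R}^{|\mathcal{S}||\mathcal{A}|}$ be an arbitrary critic vector (not depending on $\theta$). Define $J(\theta)=(1-\gamma)\mu_0^\top\Pi_\theta q_\theta$, $J_\pi(\theta,\phi)=(1-\gamma)\mu_0^\top\Pi_\theta q_\phi$, the critic residual $\delta_{\theta,\phi}=r-(I-\gamma P\Pi_\theta)q_\phi$, and $\nabla^\phi_\theta J=\sum_s d_{\mathcal{S},\theta}(s)\sum_a q_\phi(s,a)\nabla_\theta\pi_\theta(s,a)$. Then $$\nabla_\theta J-\partial_\theta J_\pi=\nabla_\theta\Big(\sum_{s,a} d_\theta(s,a)\,\delta_{\theta,\phi}(s,a)\Big),$$ where the derivative on the right acts on both $d_\theta$ and $\delta_{\theta,\phi}$ (with $q_\phi$ fixed), and $$\nabla_\theta J-\nabla^\phi_\theta J=\sum_{s,a}\nabla_\theta d_\theta(s,a)\,\delta_{\theta,\phi}(s,a),$$ i.e. the derivative of $\mathbb{E}_{(S,A)\sim d_\theta}[\delta_{\theta,\phi}(S,A)]$ taken only through $d_\theta$, with $\delta_{\theta,\phi}$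 held fixed.
   Context: The policy $\pi_\theta$ is a vector in $\mathbb{R}_+^{|\mathcal{S}||\mathcal{A}|}$ with entries $\pi_\theta(s,a)$, normalized in each state. $\Pi_\theta\in\mathbb{R}^{|\mathcal{S}|\times|\mathcal{S}||\mathcal{A}|}$ is the block-diagonal matrix whose row $s$ contains $\pi_\theta(s,\cdot)^\top$ in the block of state $s$ and zeros elsewhere, so $(\Pi_\theta v)(s)=\sum_a\pi_\theta(s,a)v(s,a)$. $q_\theta=\sum_{i\ge0}(\gamma P\Pi_\theta)^i r$ is the state-action value function of $\pi_\theta$. $d_\theta(s,a)=(1-\gamma)\sum_{i\ge0}\gamma^i\Pr(S_i=s,A_i=a)$ is the discounted state-action visitation distribution when $S_0\sim\mu_0$, actions follow $\pi_\theta$ and transitions follow $P$; $d_{\mathcal{S},\theta}(s)=\sum_a d_\theta(s,a)$. $\partial_\theta J_\pi$ denotes the gradient of $J_\pi$ in $\theta$ with $q_\phi$ held fixed. *)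

(* Defs.v *)
From HB Require Import structures.
From mathcomp Require Import all_boot all_order all_algebra.
From mathcomp Require Import all_classical all_reals all_analysis.
Set Implicit Arguments. Unset Strict Implicit. Unset Printing Implicit Defensive.
Import Order.TTheory GRing.Theory Num.Theory.
Import numFieldNormedType.Exports.
Local Open Scope ring_scope.

Section MDP.
Variables (R : realType) (S A : finType) (n : nat).
(* transition kernel P s a s' = Pr(s' | s, a), discount gamma, reward r,
   initial distribution mu0; a parametrized policy pi theta s a. *)
Variables (P : S -> A -> S -> R) (gamma : R) (r : S -> A -> R) (mu0 : S -> R).
Variable (pi : 'rV[R]_n -> S -> A -> R).

Definition PiOp (th : 'rV[R]_n) (v : S -> A -> R) : S -> R :=
  fun s => \sum_(a : A) pi th s a * v s a.

Definition gPPi (th : 'rV[R]_n) (v : S -> A -> R) : S -> A -> R :=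
  fun s a => gamma * \sum_(s' : S) P s a s' * PiOp th v s'.

Definition qfun (th : 'rV[R]_n) : S -> A -> R :=
  fun s a => limn (series (fun i => iter i (gPPi th) r s a)).

(* state marginal of S_i: mu_0 and mu_{i+1}(s') = sum_{s,a} mu_i(s) pi(s,a) P(s,a,s') *)
Definition stmarg (th : 'rV[R]_n) (i : nat) : S -> R :=
  iter i (fun mu s' => \sum_(s : S) \sum_(a : A) mu s * pi th s a * P s a s') mu0.

Definition dfun (th : 'rV[R]_n) : S -> A -> R :=
  fun s a => (1 - gamma) * limn (series (fun i => gamma ^+ i * (stmarg th i s * pi th s a))).

Definition dSfun (th : 'rV[R]_n) : S -> R := fun s => \sum_(a : A) dfun th s a.

Definition Jfun (th : 'rV[R]_n) : R :=
  (1 - gamma) * \sum_(s : S) mu0 s * PiOp th (qfun th) s.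

Definition Jpi (qphi : S -> A -> R) (th : 'rV[R]_n) : R :=
  (1 - gamma) * \sum_(s : S) mu0 s * PiOp th qphi s.

Definition delta (qphi : S -> A -> R) (th : 'rV[R]_n) : S -> A -> R :=
  fun s a => r s a - (qphi s a - gPPi th qphi s a).
End MDP.

Definition grad (R : realType) (n : nat) (f : 'rV[R]_n -> R) (th : 'rV[R]_n)
  : 'rV[R]_n := \row_(i < n) ('D_(delta_mx 0 i) f th).

(* Main.v *)
Require Import Defs.
From HB Require Import structures.
From mathcomp Require Import all_boot all_order all_algebra.
From mathcomp Require Import all_classical all_reals all_analysis.
From mathcomp Require Import ring.
Import Order.TTheory GRing.Theory Num.Theory.
Import numFieldNormedType.Exports.
Set Implicit Arguments. Unset Strict Implicit. Unset Printing Implicit Defensive.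
Local Open Scope classical_set_scope.
Local Open Scope ring_scope.

Section Dv.
Context {R : realType} {V : normedModType R} (x v : V).
Implicit Types f g : V -> R.

Lemma dv_cst (c : R) : derivable (fun _ => c) x v.
Proof. exact: derivable_cst. Qed.
Lemma D_cst (c : R) : 'D_v (fun _ : V => c) x = 0.
Proof. exact: derive_cst. Qed.
Lemma dv_add f g : derivable f x v -> derivable g x v -> derivable (fun y => f y + g y) x v.
Proof. exact: derivableD. Qed.
Lemma D_add f g : derivable f x v -> derivable g x v -> 'D_v (fun y => f y + g y) x = 'D_v f x + 'D_v g x.
Proof. exact: deriveD. Qed.
Lemma dv_opp f : derivable f x v -> derivable (fun y => - f y) x v.
Proof. exact: derivableN. Qed.
Lemma D_opp f : derivable f x v -> 'D_v (fun y => - f y) x = - 'D_v f x.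
Proof. exact: deriveN. Qed.
Lemma dv_sub f g : derivable f x v -> derivable g x v -> derivable (fun y => f y - g y) x v.
Proof. exact: derivableB. Qed.
Lemma D_sub f g : derivable f x v -> derivable g x v -> 'D_v (fun y => f y - g y) x = 'D_v f x - 'D_v g x.
Proof. exact: deriveB. Qed.
Lemma dv_mul f g : derivable f x v -> derivable g x v -> derivable (fun y => f y * g y) x v.
Proof. exact: derivableM. Qed.
Lemma D_mul f g : derivable f x v -> derivable g x v ->
  'D_v (fun y => f y * g y) x = f x * 'D_v g x + g x * 'D_v f x.
Proof. exact: deriveM. Qed.
Lemma dv_inv f : f x != 0 -> derivable f x v -> derivable (fun y => (f y)^-1) x v.
Proof. exact: derivableV. Qed.
Lemma dv_sum (I : Type) (r : seq I) (h : I -> V -> R) :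
  (forall i, derivable (h i) x v) -> derivable (fun y => \sum_(i <- r) h i y) x v.
Proof.
move=> H; elim: r => [|i r IH].
  under eq_fun do rewrite big_nil; exact: dv_cst.
under eq_fun do rewrite big_cons; exact: dv_add.
Qed.
Lemma D_sum (I : Type) (r : seq I) (h : I -> V -> R) :
  (forall i, derivable (h i) x v) ->
  'D_v (fun y => \sum_(i <- r) h i y) x = \sum_(i <- r) 'D_v (h i) x.
Proof.
move=> H; elim: r => [|i r IH].
  under eq_fun do rewrite big_nil; by rewrite big_nil D_cst.
under eq_fun do rewrite big_cons; rewrite big_cons D_add ?IH //.
exact: dv_sum.
Qed.
Lemma dv_prod (I : Type) (r : seq I) (h : I -> V -> R) :
  (forall i, derivable (h i) x v) -> derivable (fun y => \prod_(i <- r) h i y) x v.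
Proof.
move=> H; elim: r => [|i r IH].
  under eq_fun do rewrite big_nil; exact: dv_cst.
under eq_fun do rewrite big_cons; exact: dv_mul.
Qed.
End Dv.
Section Dv2.
Context {R : realType} {V : normedModType R} (x v : V).
Implicit Types f g : V -> R.
Lemma D_cmul (c : R) f : derivable f x v -> 'D_v (fun y => c * f y) x = c * 'D_v f x.
Proof. by move=> H; rewrite D_mul ?D_cst ?mulr0 ?addr0 //; exact: dv_cst. Qed.
Lemma D_mulc (c : R) f : derivable f x v -> 'D_v (fun y => f y * c) x = 'D_v f x * c.
Proof. by move=> H; rewrite D_mul ?D_cst ?mulr0 ?add0r 1?mulrC //; exact: dv_cst. Qed.
End Dv2.

Section Dm.
Context {R : realType} {V : normedModType R} (x v : V).

Lemma dv_det k (M : V -> 'M[R]_k) :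
  (forall i j, derivable (fun y => M y i j) x v) -> derivable (fun y => \det (M y)) x v.
Proof.
move=> H; apply: dv_sum => s; apply: dv_mul; first exact: dv_cst.
by apply: dv_prod => i; exact: H.
Qed.

Lemma dv_invmx k (M : V -> 'M[R]_k) :
  (forall i j, derivable (fun y => M y i j) x v) -> (forall y, M y \in unitmx) ->
  forall i j, derivable (fun y => invmx (M y) i j) x v.
Proof.
move=> H U i j.
have E : (fun y => invmx (M y) i j) =
   (fun y => (\det (M y))^-1 * ((-1) ^+ (j + i) * \det (row' j (col' i (M y))))).
  by apply: funext => y; rewrite /invmx U !mxE.
rewrite E; apply: dv_mul.
  apply: dv_inv; first by have := U x; rewrite unitmxE unitfE.
  exact: dv_det.
apply: dv_mul; first exact: dv_cst.
by apply: dv_det => a b; rewrite /=; under eq_fun do rewrite !mxE; exact: H.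
Qed.
End Dm.

Section M.
Variables (R : realType) (S A : finType) (n : nat).
Variables (P : S -> A -> S -> R) (gamma : R) (r : S -> A -> R) (mu0 : S -> R).
Variable (pi : 'rV[R]_n -> S -> A -> R).
Hypothesis HP0 : forall s a s', 0 <= P s a s'.
Hypothesis HP1 : forall s a, \sum_(s' : S) P s a s' = 1.
Hypothesis Hmu0 : forall s, 0 <= mu0 s.
Hypothesis Hmu1 : \sum_(s : S) mu0 s = 1.
Hypothesis Hg0 : 0 <= gamma.
Hypothesis Hg1 : gamma < 1.
Hypothesis Hpi0 : forall th s a, 0 <= pi th s a.
Hypothesis Hpi1 : forall th s, \sum_(a : A) pi th s a = 1.

Notation st := (stmarg P mu0 pi).

Lemma stS th i s' : st th i.+1 s' = \sum_s \sum_a st th i s * pi th s a * P s a s'.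
Proof. by rewrite /stmarg iterS. Qed.

Lemma st_ge0 th i s : 0 <= st th i s.
Proof.
elim: i s => [|i IH] s; first exact: Hmu0.
rewrite stS; apply: sumr_ge0 => s0 _; apply: sumr_ge0 => a _.
by rewrite !mulr_ge0.
Qed.

Lemma st_sum th i : \sum_s st th i s = 1.
Proof.
elim: i => [|i IH]; first exact: Hmu1.
under eq_bigr do rewrite stS.
rewrite exchange_big /= -IH; apply: eq_bigr => s _.
rewrite exchange_big /= -[RHS]mulr1 -(Hpi1 th s) mulr_sumr; apply: eq_bigr => a _.
by rewrite -mulr_sumr HP1 mulr1.
Qed.

Lemma st_le1 th i s : st th i s <= 1.
Proof.
rewrite -(st_sum th i) (bigD1 s) //= lerDl; apply: sumr_ge0 => *; exact: st_ge0.
Qed.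

Definition mm th s := limn (series (fun i => gamma ^+ i * st th i s)).

Lemma mm_cvg th s : series (fun i => gamma ^+ i * st th i s) @ \oo --> mm th s.
Proof.
apply: (@series_le_cvg _ _ (geometric 1 gamma)).
- by move=> i; rewrite mulr_ge0 ?exprn_ge0 ?st_ge0.
- by move=> i; rewrite /geometric /= mul1r exprn_ge0.
- by move=> i; rewrite /geometric /= mul1r ler_piMr ?exprn_ge0 ?st_le1.
- by apply: is_cvg_geometric_series; rewrite ger0_norm.
Qed.

Lemma cvg_sumr (I : Type) (rr : seq I) (f : I -> nat -> R) (l : I -> R) :
  (forall i, f i @ \oo --> l i) ->
  (fun N => \sum_(i <- rr) f i N) @ \oo --> \sum_(i <- rr) l i.
Proof.
move=> H; elim: rr => [|i rr IH].
  under eq_fun do rewrite big_nil; rewrite big_nil; exact: cvg_cst.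
under eq_fun do rewrite big_cons; rewrite big_cons; exact: cvgD.
Qed.

Lemma mm_flow th s' :
  mm th s' = mu0 s' + gamma * \sum_s \sum_a mm th s * pi th s a * P s a s'.
Proof.
have E : (fun N => series (fun i => gamma ^+ i * st th i s') N.+1) =
  (fun N => mu0 s' + gamma * \sum_s \sum_a
      series (fun i => gamma ^+ i * st th i s) N * pi th s a * P s a s').
  apply: funext => N; rewrite seriesEord /= big_ord_recl /= expr0 mul1r; congr (_ + _).
  rewrite /bump /=.
  under eq_bigr do rewrite add1n add0n exprS mulr_sumr.
  under eq_bigr do under eq_bigr do rewrite mulr_sumr.
  rewrite mulr_sumr; under [RHS]eq_bigr do rewrite mulr_sumr.
  under [RHS]eq_bigr do under eq_bigr do rewrite seriesEord /= !mulr_suml mulr_sumr.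
  rewrite exchange_big /=; apply: eq_bigr => s _.
  rewrite exchange_big /=; apply: eq_bigr => a _.
  apply: eq_bigr => i _; ring.
have H : series (fun i => gamma ^+ i * st th i s') @ \oo -->
   (mu0 s' + gamma * \sum_s \sum_a mm th s * pi th s a * P s a s').
  rewrite -cvg_shiftS /= E; apply: cvgD; first exact: cvg_cst.
  apply: cvgMl_tmp; apply: cvg_sumr => s; apply: cvg_sumr => a.
  apply: cvgMr_tmp; apply: cvgMr_tmp; exact: mm_cvg.
exact: cvg_lim H.
Qed.

Lemma dfunE th s a : dfun P gamma mu0 pi th s a = (1 - gamma) * (mm th s * pi th s a).
Proof.
rewrite /dfun; congr (_ * _).
have E : series (fun i => gamma ^+ i * (st th i s * pi th s a)) =
   (fun N => series (fun i => gamma ^+ i * st th i s) N * pi th s a).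
  apply: funext => N; rewrite !seriesEord /= mulr_suml; apply: eq_bigr => i _.
  by rewrite mulrA.
have H : series (fun i => gamma ^+ i * (st th i s * pi th s a)) @ \oo --> mm th s * pi th s a.
  rewrite E; apply: cvgMr_tmp; exact: mm_cvg.
exact: cvg_lim H.
Qed.

Lemma sum_ev (F : S -> R) : \sum_s F s = \sum_(i < #|S|) F (enum_val i).
Proof. by rewrite (reindex _ (onW_bij _ (@enum_val_bij S))). Qed.

Definition Mr th (i j : 'I_#|S|) : R :=
  \sum_a pi th (enum_val i) a * P (enum_val i) a (enum_val j).
Definition Mx th : 'M[R]_#|S| := \matrix_(i, j) ((i == j)%:R - gamma * Mr th i j).
Definition mrow th : 'rV[R]_#|S| := \row_j mm th (enum_val j).
Definition murow : 'rV[R]_#|S| := \row_j mu0 (enum_val j).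

Lemma Mr_ge0 th i j : 0 <= Mr th i j.
Proof. by apply: sumr_ge0 => a _; rewrite mulr_ge0. Qed.

Lemma Mr_sum th i : \sum_j Mr th i j = 1.
Proof.
rewrite /Mr exchange_big /= -(Hpi1 th (enum_val i)); apply: eq_bigr => a _.
by rewrite -mulr_sumr -sum_ev HP1 mulr1.
Qed.

Lemma mulMx (w : 'rV[R]_#|S|) th j :
  (w *m Mx th) 0 j = w 0 j - gamma * \sum_i w 0 i * Mr th i j.
Proof.
rewrite !mxE; under eq_bigr do rewrite mxE mulrBr.
rewrite sumrB (bigD1 j) //= eqxx mulr1 big1 ?addr0; last first.
  by move=> i /negbTE; rewrite eq_sym => ->; rewrite mulr0.
congr (_ - _); rewrite mulr_sumr; apply: eq_bigr => i _; ring.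
Qed.

Lemma mrow_eq th : mrow th *m Mx th = murow.
Proof.
apply/rowP => j; rewrite mulMx !mxE {1}mm_flow sum_ev.
suff -> : gamma * \sum_(i < #|S|) \sum_a mm th (enum_val i) * pi th (enum_val i) a *
      P (enum_val i) a (enum_val j) = gamma * \sum_i mrow th 0 i * Mr th i j by rewrite addrK.
congr (_ * _); apply: eq_bigr => i _; rewrite mxE /Mr mulr_sumr; apply: eq_bigr => a _.
by rewrite mulrA.
Qed.

Lemma Mx_unit th : Mx th \in unitmx.
Proof.
rewrite unitmxE unitfE; apply/negP => /det0P [w /eqP w0 hw]; apply: w0.
have Ej j : w 0 j = gamma * \sum_i w 0 i * Mr th i j.
  by have := congr1 (fun M : 'M[R]_(1, #|S|) => M 0 j) hw; rewrite mulMx mxE => /eqP; rewrite subr_eq0 => /eqP.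
have Hs : \sum_j `|w 0 j| <= gamma * \sum_i `|w 0 i|.
  apply: (@le_trans _ _ (\sum_j gamma * \sum_i `|w 0 i| * Mr th i j)).
    apply: ler_sum => j _; rewrite {1}Ej normrM ger0_norm //.
    apply: ler_wpM2l => //; apply: le_trans (ler_norm_sum _ _ _) _.
    by apply: ler_sum => i _; rewrite normrM (ger0_norm (Mr_ge0 _ _ _)).
  rewrite -mulr_sumr exchange_big /=; apply: ler_wpM2l => //.
  by rewrite le_eqVlt; apply/orP; left; apply/eqP/eq_bigr => i _; rewrite -mulr_sumr Mr_sum mulr1.
have H0 : \sum_j `|w 0 j| = 0.
  apply/eqP; rewrite eq_le sumr_ge0 ?andbT; last by move=> j _; exact: normr_ge0.
  have : (1 - gamma) * \sum_j `|w 0 j| <= 0 by rewrite mulrBl mul1r subr_le0.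
  by rewrite pmulr_rle0 // subr_gt0.
apply/rowP => j; rewrite mxE; apply/normr0_eq0.
by move/psumr_eq0P: H0 => ->.
Qed.

Lemma mm_formula th s :
  mm th s = \sum_i mu0 (enum_val i) * invmx (Mx th) i (enum_rank s).
Proof.
have := congr1 (fun M : 'M[R]_(1, #|S|) => M 0 (enum_rank s)) (congr1 (mulmx^~ (invmx (Mx th))) (mrow_eq th)).
rewrite /= mulmxK ?Mx_unit // mxE enum_rankK => ->; rewrite mxE.
by apply: eq_bigr => i _; rewrite mxE.
Qed.

Lemma mm_dv th v s : (forall s a, derivable (fun y => pi y s a) th v) ->
  derivable (fun y => mm y s) th v.
Proof.
move=> Hd; under eq_fun do rewrite mm_formula.
apply: dv_sum => i; apply: dv_mul; first exact: dv_cst.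
apply: (dv_invmx (M := Mx)); last exact: Mx_unit.
move=> i0 j0; under eq_fun do rewrite mxE.
apply: dv_sub; first exact: dv_cst.
apply: dv_mul; first exact: dv_cst.
by apply: dv_sum => a; apply: dv_mul; [exact: Hd|exact: dv_cst].
Qed.

Notation g := (gPPi P gamma pi).

Lemma le_sum_term (I : finType) (F : I -> R) i : (forall j, 0 <= F j) -> F i <= \sum_j F j.
Proof. by move=> H; rewrite (bigD1 i) //= lerDl sumr_ge0. Qed.

Lemma g_bound th (x : S -> A -> R) b : (forall s a, `|x s a| <= b) ->
  forall s a, `|g th x s a| <= gamma * b.
Proof.
move=> H s a; rewrite /gPPi normrM ger0_norm //; apply: ler_wpM2l => //.
apply: le_trans (ler_norm_sum _ _ _) _.
apply: (@le_trans _ _ (\sum_s' P s a s' * b)); last by rewrite -mulr_suml HP1 mul1r.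
apply: ler_sum => s' _; rewrite normrM ger0_norm //; apply: ler_wpM2l => //.
rewrite /PiOp; apply: le_trans (ler_norm_sum _ _ _) _.
apply: (@le_trans _ _ (\sum_a' pi th s' a' * b)); last by rewrite -mulr_suml Hpi1 mul1r.
by apply: ler_sum => a' _; rewrite normrM ger0_norm //; apply: ler_wpM2l.
Qed.

Definition Cr := \sum_s \sum_a `|r s a|.

Lemma iter_bound th i s a : `|iter i (g th) r s a| <= gamma ^+ i * Cr.
Proof.
elim: i s a => [|i IH] s a.
  rewrite /= expr0 mul1r /Cr; apply: (@le_trans _ _ (\sum_a' `|r s a'|)).
    by apply: (le_sum_term (F := fun a' => `|r s a'|)) => j; exact: normr_ge0.
  apply: (le_sum_term (F := fun s0 => \sum_a' `|r s0 a'|)) => j.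
  by apply: sumr_ge0 => *; exact: normr_ge0.
by rewrite iterS exprS -mulrA; apply: g_bound.
Qed.

Lemma q_cvg th s a : series (fun i => iter i (g th) r s a) @ \oo --> qfun P gamma r pi th s a.
Proof.
apply: normed_cvg.
apply: (@series_le_cvg _ _ (geometric Cr gamma)).
- by move=> i; exact: normr_ge0.
- move=> i; rewrite /geometric /= mulr_ge0 ?exprn_ge0 //.
  by apply: sumr_ge0 => *; apply: sumr_ge0 => *; exact: normr_ge0.
- by move=> i; rewrite /geometric /= mulrC; exact: iter_bound.
- by apply: is_cvg_geometric_series; rewrite ger0_norm.
Qed.

Lemma bellman th s a :
  qfun P gamma r pi th s a = r s a + g th (qfun P gamma r pi th) s a.
Proof.
set q := qfun P gamma r pi th.
have E : (fun N => series (fun i => iter i (g th) r s a) N.+1) =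
  (fun N => r s a + gamma * \sum_s' P s a s' * \sum_a' pi th s' a' *
      series (fun i => iter i (g th) r s' a') N).
  apply: funext => N; rewrite seriesEord /= big_ord_recl /=; congr (_ + _).
  rewrite /bump /=.

  under eq_bigr do rewrite add0n /gPPi /PiOp.
  rewrite -mulr_sumr; congr (_ * _).
  rewrite exchange_big /=; apply: eq_bigr => s' _; rewrite -mulr_sumr; congr (_ * _).
  rewrite exchange_big /=; apply: eq_bigr => a' _; rewrite seriesEord /= mulr_sumr.
  by [].
have H : series (fun i => iter i (g th) r s a) @ \oo -->
   (r s a + g th q s a).
  rewrite -cvg_shiftS /= E; apply: cvgD; first exact: cvg_cst.
  apply: cvgMl_tmp; apply: cvg_sumr => s'; apply: cvgMl_tmp; apply: cvg_sumr => a'.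
  apply: cvgMl_tmp; exact: q_cvg.
exact: cvg_lim H.
Qed.

Lemma flowsum th (y : S -> R) :
  \sum_s \sum_a mm th s * pi th s a * (gamma * \sum_s' P s a s' * y s') =
  \sum_s' (mm th s' - mu0 s') * y s'.
Proof.
under [RHS]eq_bigr do rewrite {1}mm_flow addrAC subrr add0r -mulrA mulr_suml mulr_sumr.
under [RHS]eq_bigr do under eq_bigr do rewrite mulr_suml mulr_sumr.
transitivity (\sum_s \sum_a \sum_s' gamma * (mm th s * pi th s a * P s a s' * y s')).
  apply: eq_bigr => s _; apply: eq_bigr => a _; rewrite mulr_sumr mulr_sumr.
  apply: eq_bigr => s' _; ring.
transitivity (\sum_s \sum_s' \sum_a gamma * (mm th s * pi th s a * P s a s' * y s')).
  by apply: eq_bigr => s _; rewrite exchange_big.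
by rewrite exchange_big.
Qed.

Lemma key th (x : S -> A -> R) :
  \sum_s \sum_a dfun P gamma mu0 pi th s a * (x s a - g th x s a)
  = (1 - gamma) * \sum_s mu0 s * PiOp pi th x s.
Proof.
have T2 : \sum_s \sum_a mm th s * pi th s a * g th x s a =
          \sum_s' (mm th s' - mu0 s') * PiOp pi th x s' by exact: flowsum.
have T1 : \sum_s \sum_a mm th s * pi th s a * x s a = \sum_s mm th s * PiOp pi th x s.
  by apply: eq_bigr => s _; rewrite /PiOp mulr_sumr; apply: eq_bigr => a _; rewrite mulrA.
have -> : \sum_s \sum_a dfun P gamma mu0 pi th s a * (x s a - g th x s a) =
   (1 - gamma) * ((\sum_s \sum_a mm th s * pi th s a * x s a) -
                  \sum_s \sum_a mm th s * pi th s a * g th x s a).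
  rewrite -sumrB mulr_sumr; apply: eq_bigr => s _.
  rewrite -sumrB mulr_sumr; apply: eq_bigr => a _; rewrite dfunE; ring.
rewrite T1 T2 -sumrB; congr (_ * _); apply: eq_bigr => s _; ring.
Qed.

Lemma JF qphi th : Jfun P gamma r mu0 pi th - Jpi gamma mu0 pi qphi th =
  \sum_s \sum_a dfun P gamma mu0 pi th s a * delta P gamma r pi qphi th s a.
Proof.
rewrite /Jfun /Jpi -!key -sumrB; apply: eq_bigr => s _; rewrite -sumrB.
apply: eq_bigr => a _; rewrite -mulrBr; congr (_ * _).
have Hr : qfun P gamma r pi th s a - g th (qfun P gamma r pi th) s a = r s a.
  by rewrite {1}bellman addrK.
by rewrite /delta -Hr.
Qed.

Lemma main_sec qphi th :
  (forall th s a, differentiable (fun th' => pi th' s a) th) ->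
    grad (Jfun P gamma r mu0 pi) th - grad (Jpi gamma mu0 pi qphi) th
      = grad (fun th' => \sum_(s : S) \sum_(a : A)
                 dfun P gamma mu0 pi th' s a * delta P gamma r pi qphi th' s a) th
 /\ grad (Jfun P gamma r mu0 pi) th
      - \sum_(s : S) dSfun P gamma mu0 pi th s *:
          \sum_(a : A) qphi s a *: grad (fun th' => pi th' s a) th
      = \sum_(s : S) \sum_(a : A)
          delta P gamma r pi qphi th s a *: grad (fun th' => dfun P gamma mu0 pi th' s a) th.
Proof.
move=> Hd.
have dpi v s a : derivable (fun y => pi y s a) th v by apply: diff_derivable.
have dd v s a : derivable (fun y => dfun P gamma mu0 pi y s a) th v.
  under eq_fun do rewrite dfunE.
  apply: dv_mul; first exact: dv_cst.
  by apply: dv_mul; [apply: mm_dv => s0 a0; exact: dpi|exact: dpi].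
pose y0 v s' := \sum_a' 'D_v (fun y => pi y s' a') th * qphi s' a'.
have dsum v s' : derivable (fun y => \sum_a' pi y s' a' * qphi s' a') th v.
  by apply: dv_sum => a'; apply: dv_mul; [exact: dpi|exact: dv_cst].
have Dsum v s' : 'D_v (fun y => \sum_a' pi y s' a' * qphi s' a') th = y0 v s'.
  by rewrite D_sum; [apply: eq_bigr => a' _; rewrite D_mulc|move=> a'; apply: dv_mul; [exact: dpi|exact: dv_cst]].
have Edel s a : (fun y => delta P gamma r pi qphi y s a) =
   (fun y => (r s a - qphi s a) + gamma * \sum_s' P s a s' * \sum_a' pi y s' a' * qphi s' a').
  apply: funext => y; rewrite /delta /gPPi /PiOp.
  ring.
have dg v s a : derivable (fun y => gamma * \sum_s' P s a s' * \sum_a' pi y s' a' * qphi s' a') th v.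
  apply: dv_mul; first exact: dv_cst.
  by apply: dv_sum => s'; apply: dv_mul; [exact: dv_cst|exact: dsum].
have ddel v s a : derivable (fun y => delta P gamma r pi qphi y s a) th v.
  by rewrite Edel; apply: dv_add; [exact: dv_cst|exact: dg].
have Ddel v s a : 'D_v (fun y => delta P gamma r pi qphi y s a) th =
    gamma * \sum_s' P s a s' * y0 v s'.
  rewrite Edel D_add; [|exact: dv_cst|exact: dg].
  rewrite D_cst add0r D_cmul; last by apply: dv_sum => s'; apply: dv_mul; [exact: dv_cst|exact: dsum].
  congr (_ * _); rewrite D_sum; last by move=> s'; apply: dv_mul; [exact: dv_cst|exact: dsum].
  by apply: eq_bigr => s' _; rewrite D_cmul ?Dsum.
have EJ : Jpi gamma mu0 pi qphi = (fun y => (1 - gamma) * \sum_s mu0 s * \sum_a pi y s a * qphi s a).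
  by apply: funext => y; rewrite /Jpi /PiOp.
have dJ v : derivable (Jpi gamma mu0 pi qphi) th v.
  rewrite EJ; apply: dv_mul; first exact: dv_cst.
  by apply: dv_sum => s; apply: dv_mul; [exact: dv_cst|exact: dsum].
have DJ v : 'D_v (Jpi gamma mu0 pi qphi) th = (1 - gamma) * \sum_s mu0 s * y0 v s.
  rewrite EJ D_cmul; last by apply: dv_sum => s; apply: dv_mul; [exact: dv_cst|exact: dsum].
  congr (_ * _); rewrite D_sum; last by move=> s; apply: dv_mul; [exact: dv_cst|exact: dsum].
  by apply: eq_bigr => s _; rewrite D_cmul ?Dsum.
pose F := fun y => \sum_s \sum_a dfun P gamma mu0 pi y s a * delta P gamma r pi qphi y s a.
have dF v : derivable F th v.
  by apply: dv_sum => s; apply: dv_sum => a; apply: dv_mul.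
have DF v : 'D_v F th = \sum_s \sum_a (dfun P gamma mu0 pi th s a *
      'D_v (fun y => delta P gamma r pi qphi y s a) th +
      delta P gamma r pi qphi th s a * 'D_v (fun y => dfun P gamma mu0 pi y s a) th).
  rewrite /F D_sum; last by move=> s; apply: dv_sum => a; apply: dv_mul.
  apply: eq_bigr => s _; rewrite D_sum; last by move=> a; apply: dv_mul.
  by apply: eq_bigr => a _; rewrite D_mul.
have JE : Jfun P gamma r mu0 pi = (fun y => F y + Jpi gamma mu0 pi qphi y).
  by apply: funext => y; rewrite /F -JF subrK.
split; apply/rowP => i; rewrite !mxE.
  by rewrite JE D_add // addrK.
set v := delta_mx 0 i.
have E1 : (\sum_s dSfun P gamma mu0 pi th s *:
      \sum_a qphi s a *: grad (fun th' => pi th' s a) th) 0 i =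
   \sum_s dSfun P gamma mu0 pi th s * \sum_a qphi s a * 'D_v (fun y => pi y s a) th.
  rewrite summxE; apply: eq_bigr => s _; rewrite mxE summxE; congr (_ * _).
  by apply: eq_bigr => a _; rewrite !mxE.
have E2 : (\sum_s \sum_a delta P gamma r pi qphi th s a *:
      grad (fun th' => dfun P gamma mu0 pi th' s a) th) 0 i =
   \sum_s \sum_a delta P gamma r pi qphi th s a * 'D_v (fun y => dfun P gamma mu0 pi y s a) th.
  rewrite summxE; apply: eq_bigr => s _; rewrite summxE.
  by apply: eq_bigr => a _; rewrite !mxE.
rewrite E1 E2 JE D_add // DF DJ.
have H1 : \sum_s \sum_a dfun P gamma mu0 pi th s a * 'D_v (fun y => delta P gamma r pi qphi y s a) th
    = (1 - gamma) * \sum_s' (mm th s' - mu0 s') * y0 v s'.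
  rewrite -flowsum mulr_sumr; apply: eq_bigr => s _; rewrite mulr_sumr.
  by apply: eq_bigr => a _; rewrite Ddel dfunE; ring.
have H2 : \sum_s dSfun P gamma mu0 pi th s * \sum_a qphi s a * 'D_v (fun y => pi y s a) th
    = (1 - gamma) * \sum_s mm th s * y0 v s.
  rewrite mulr_sumr; apply: eq_bigr => s _; rewrite /dSfun.
  under eq_bigr do rewrite dfunE.
  rewrite -mulr_sumr -mulr_sumr Hpi1 mulr1 mulrA; congr (_ * _).
  by apply: eq_bigr => a _; rewrite mulrC.
rewrite H2; under eq_bigr do rewrite big_split; rewrite big_split /= H1.
have H3 : \sum_s' (mm th s' - mu0 s') * y0 v s' = \sum_s mm th s * y0 v s - \sum_s mu0 s * y0 v s.
  by rewrite -sumrB; apply: eq_bigr => s _; rewrite mulrBl.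
rewrite H3; ring.
Qed.
End M.

Local Close Scope classical_set_scope.
Unset Implicit Arguments.

Theorem theorem1 (R : realType) (S A : finType) (n : nat)
  (P : S -> A -> S -> R) (gamma : R) (r : S -> A -> R) (mu0 : S -> R)
  (pi : 'rV[R]_n -> S -> A -> R) (qphi : S -> A -> R) :
  (forall s a s', 0 <= P s a s') ->
  (forall s a, \sum_(s' : S) P s a s' = 1) ->
  (forall s, 0 <= mu0 s) -> \sum_(s : S) mu0 s = 1 ->
  0 <= gamma -> gamma < 1 ->
  (forall th s a, 0 <= pi th s a) ->
  (forall th s, \sum_(a : A) pi th s a = 1) ->
  (forall th s a, differentiable (fun th' => pi th' s a) th) ->
  forall th : 'rV[R]_n,
    grad (Jfun P gamma r mu0 pi) th - grad (Jpi gamma mu0 pi qphi) th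
      = grad (fun th' => \sum_(s : S) \sum_(a : A)
                 dfun P gamma mu0 pi th' s a * delta P gamma r pi qphi th' s a) th
 /\ grad (Jfun P gamma r mu0 pi) th
      - \sum_(s : S) dSfun P gamma mu0 pi th s *:
          \sum_(a : A) qphi s a *: grad (fun th' => pi th' s a) th
      = \sum_(s : S) \sum_(a : A)
          delta P gamma r pi qphi th s a *: grad (fun th' => dfun P gamma mu0 pi th' s a) th.
Proof.
move=> HP0 HP1 Hmu0 Hmu1 Hg0 Hg1 Hpi0 Hpi1 Hd th.
exact: (main_sec r HP0 HP1 Hmu0 Hmu1 Hg0 Hg1 Hpi0 Hpi1 qphi th Hd).
Qed.
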